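(* For any digraphs $G$ and $H$, there is a homomorphism $G\to\delta H$ if and only if there is a homomorphism $\delta^{-1}G\to H$.
   Context: Digraphs are finite, $G=(V,A)$ with $A\subseteq V\times V$; a homomorphism is an arc-preserving map of vertex sets, and $G\to H$ means a homomorphism from $G$ to $H$ exists. The arc graph of $G=(V,A)$ is $\delta G=(A,\delta A)$ with $\delta A=\{((u,v),(v,w)) : (u,v),(v,w)\in A\}$. For an equivalence $\sim$ on $V(G)$, the quotient $G/{\sim}$ has vertex set the equivalence classes, and $(X,Y)$ is an arc iff some $x\in X$, $y\in Y$ have $(x,y)\in A(G)$. Define $\delta^{-1}G$ as follows: let $V'=\{o_u,t_u : u\in V\}$ (new, distinct symbols), $A'=\{(o_u,t_u): u\in V\}$, let $\sim_0$ be the relation with $t_u\sim_0 o_v$ iff $(u,v)\in A$, let $\sim$ be the smallest equivalence relation on $V'$ containing $\sim_0$, and set $\delta^{-1}G=(V',A')/{\sim}$. *)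

(* Defs.v *)
From mathcomp Require Import all_boot.
Set Implicit Arguments.
Unset Strict Implicit.
Unset Printing Implicit Defensive.

Record digraph := Digraph { vertex : finType; arc : rel vertex }.

Definition is_hom (G H : digraph) (f : vertex G -> vertex H) : Prop :=
  forall x y, arc x y -> arc (f x) (f y).

Definition hom_exists (G H : digraph) : Prop :=
  exists f : vertex G -> vertex H, is_hom f.

Definition arc_vertex (G : digraph) : finType :=
  {p : vertex G * vertex G | arc p.1 p.2}.

Definition arc_graph (G : digraph) : digraph :=
  @Digraph (arc_vertex G) (fun a b => (val a).2 == (val b).1).

Definition equiv_closure (T : finType) (r : rel T) : rel T :=
  connect (fun x y => r x y || r y x).

Definition eq_class (T : finType) (R : rel T) (x : T) : {set T} :=
  [set y | R x y].

Definition class_type (T : finType) (R : rel T) : finType :=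
  {C : {set T} | [exists x, C == eq_class R x]}.

Definition quotient_digraph (G : digraph) (R : rel (vertex G)) : digraph :=
  @Digraph (class_type R)
    (fun X Y => [exists x, [exists y,
        [&& x \in val X, y \in val Y & arc x y]]]).

(* delta^{-1} G.  V' = {o_u, t_u : u in V} encoded as V + V with
   o_u = inl u and t_u = inr u; A' = {(o_u, t_u)}. *)
Definition inv_vertex (G : digraph) : finType := (vertex G + vertex G)%type.

Definition inv_pre (G : digraph) : digraph :=
  @Digraph (inv_vertex G)
    (fun a b => match a, b with inl u, inr v => u == v | _, _ => false end).

Definition inv_rel0 (G : digraph) : rel (inv_vertex G) :=
  fun a b => match a, b with inr u, inl v => arc u v | _, _ => false end.

Definition inv_arc_graph (G : digraph) : digraph :=
  @quotient_digraph (inv_pre G) (equiv_closure (@inv_rel0 G)).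

(* Main.v *)
Require Import Defs.
From mathcomp Require Import all_boot.
Set Implicit Arguments.
Unset Strict Implicit.

Lemma connect_const (T : finType) (e : rel T) (U : Type) (g : T -> U) :
  (forall x y, e x y -> g x = g y) -> forall x y, connect e x y -> g x = g y.
Proof.
move=> He x y /connectP [p pth ->]; elim: p x pth => [|z p IH] x //=.
by case/andP=> exz pz; rewrite (He _ _ exz) (IH _ pz).
Qed.

Definition cls (G : digraph) (x : inv_vertex G) : vertex (inv_arc_graph G).
Proof.
exists (eq_class (equiv_closure (@inv_rel0 G)) x).
by apply/existsP; exists x.
Defined.

Lemma cls_eq (G : digraph) (x y : inv_vertex G) :
  equiv_closure (@inv_rel0 G) x y -> cls x = cls y.
Proof.
move=> Hxy; apply: val_inj => /=.
have Hs : connect_sym (fun x y => @inv_rel0 G x y || @inv_rel0 G y x).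
  apply: sym_connect_sym => a b; by rewrite orbC.
apply/setP => z; rewrite !inE /equiv_closure; apply/idP/idP => H.
- by apply: connect_trans H; rewrite Hs.
- exact: connect_trans Hxy H.
Qed.

Theorem proposition2p1 (G H : digraph) :
  hom_exists G (arc_graph H) <-> hom_exists (inv_arc_graph G) H.
Proof.
split.
- move=> [f Hf].
  pose g (a : inv_vertex G) : vertex H :=
    match a with inl u => (val (f u)).1 | inr u => (val (f u)).2 end.
  have Hg : forall x y, equiv_closure (@inv_rel0 G) x y -> g x = g y.
    apply: connect_const => [[u|u] [v|v]] //=.
    + by move=> H1; have := Hf _ _ H1; rewrite /= => /eqP ->.
    + by rewrite orbF => H1; have := Hf _ _ H1; rewrite /= => /eqP ->.
  have rep : forall C : vertex (inv_arc_graph G), {x | val C == eq_class (equiv_closure (@inv_rel0 G)) x}.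
    move=> C; apply: sigW; apply/existsP; exact: (valP C).
  exists (fun C => g (sval (rep C))) => X Y /existsP [x /existsP [y /and3P [xX yY]]].
  case: x xX => [u|u] //; case: y yY => [v|v] // yY xX /eqP Huv; subst v.
  case: (rep X) => rx /= /eqP HX; case: (rep Y) => ry /= /eqP HY.
  move: xX yY; change (val X) with (sval X); change (val Y) with (sval Y); rewrite HX HY !inE => /Hg -> /Hg -> /=.
  exact: (valP (f u)).
- move=> [h Hh].
  have Ha : forall u : vertex G, Defs.arc (h (cls (inl u))) (h (cls (inr u))).
    move=> u; apply: Hh; apply/existsP; exists (inl u); apply/existsP; exists (inr u).
    rewrite !inE /=; apply/and3P; split => //; exact: connect0.
  exists (fun u => Sub (h (cls (inl u)), h (cls (inr u))) (Ha u)) => x y Hxy /=.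
  rewrite (@cls_eq G (inr x) (inl y)) //.
  by apply: connect1; rewrite /= Hxy.
Qed.
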